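(* Let $[\mu]\in\mathbb PV_n$ be a critical point of $F_n$ with $\mathrm M_\mu=c_\mu I+D_\mu$, $c_\mu\in\mathbb R$, $D_\mu\in\mathrm{Der}(\mu)$. Then (i) $c_\mu=\dfrac{\operatorname{tr}\mathrm M_\mu^2}{\operatorname{tr}\mathrm M_\mu}=-\dfrac12\dfrac{\operatorname{tr}\mathrm M_\mu^2}{\|\mu\|^2}<0$; (ii) if $\operatorname{tr}D_\mu\neq0$, then $c_\mu=-\dfrac{\operatorname{tr}D_\mu^2}{\operatorname{tr}D_\mu}$ and $\operatorname{tr}D_\mu>0$.
   Context: $V_n$ is the space of bilinear maps $\mu:\mathbb C^n\times\mathbb C^n\to\mathbb C^n$ with the Hermitian inner product $\langle\mu,\lambda\rangle=\sum_{i,j,k}\langle\mu(X_i,X_j),X_k\rangle\overline{\langle\lambda(X_i,X_j),X_k\rangle}$ ($\{X_i\}$ orthonormal for the standard inner product of $\mathbb C^n$). $L^\mu_XY=\mu(X,Y)$, $R^\mu_XY=\mu(Y,X)$, $\mathrm M_\mu=2\sum_i L^\mu_{X_i}(L^\mu_{X_i})^*-2\sum_i (L^\mu_{X_i})^*L^\mu_{X_i}-2\sum_i (R^\mu_{X_i})^*R^\mu_{X_i}$. $F_n([\mu])=\operatorname{tr}\mathrm M_\mu^2/\|\mu\|^4$ on $\mathbb PV_n$; $\mathrm{Der}(\mu)$ is the derivation algebra. $[\mu]$ is a critical point of $F_n$ iff $\mathrm M_\mu=c_\mu I+D_\mu$ with $c_\mu\in\mathbb R$, $D_\mu\in\mathrm{Der}(\mu)$.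 *)

(* Defs.v *)
From HB Require Import structures.
From mathcomp Require Import all_boot all_order all_algebra.
From mathcomp Require Import complex.
From mathcomp Require Import reals.
Set Implicit Arguments. Unset Strict Implicit. Unset Printing Implicit Defensive.
Import Order.TTheory GRing.Theory Num.Theory.
Local Open Scope ring_scope.

Section Defs.
Variable R : realType.
Local Notation C := (complex R).
Variable n : nat.

(* A bilinear map mu : C^n x C^n -> C^n, given by its structure constants in
   the standard orthonormal basis X_0..X_{n-1}:
   mu(X_i, X_j) = sum_k (mu i j k) X_k. *)
Definition bilin := 'I_n -> 'I_n -> 'I_n -> C.

Definition mu_app (mu : bilin) (x y : 'cV[C]_n) : 'cV[C]_n :=
  \col_k \sum_(i < n) \sum_(j < n) x i 0 * y j 0 * mu i j k.

Definition adjmx (A : 'M[C]_n) : 'M[C]_n := map_mx Num.conj (A^T).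

Definition Lmx (mu : bilin) (i : 'I_n) : 'M[C]_n := \matrix_(k, j) mu i j k.
Definition Rmx (mu : bilin) (i : 'I_n) : 'M[C]_n := \matrix_(k, j) mu j i k.

Definition Mmu (mu : bilin) : 'M[C]_n :=
  (2 : C) *: (\sum_(i < n) Lmx mu i *m adjmx (Lmx mu i))
  - (2 : C) *: (\sum_(i < n) adjmx (Lmx mu i) *m Lmx mu i)
  - (2 : C) *: (\sum_(i < n) adjmx (Rmx mu i) *m Rmx mu i).

Definition normsq (mu : bilin) : C :=
  \sum_(i < n) \sum_(j < n) \sum_(k < n) `|mu i j k| ^+ 2.

Definition is_der (mu : bilin) (D : 'M[C]_n) : Prop :=
  forall x y : 'cV[C]_n,
    D *m mu_app mu x y = mu_app mu (D *m x) y + mu_app mu x (D *m y).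

End Defs.

(* Main.v *)
Require Import Defs.
From HB Require Import structures.
From mathcomp Require Import all_boot all_order all_algebra.
From mathcomp Require Import complex.
From mathcomp Require Import reals ring.
Import Order.TTheory GRing.Theory Num.Theory.
Local Open Scope ring_scope.
Section S. Variable R : realType.
Local Notation C := (complex R).
Variable n : nat.
Variable mu : bilin R n.

Lemma trmul (A E : 'M[C]_n) : \tr (A *m E) = \sum_a \sum_b A a b * E b a.
Proof. by rewrite /mxtrace; apply: eq_bigr => a _; rewrite mxE. Qed.

Lemma T1 (E : 'M[C]_n) :
  \tr ((\sum_i Lmx mu i *m adjmx (Lmx mu i)) *m E) =
  \sum_i \sum_j \sum_k (mu i j k)^* * \sum_l E k l * mu i j l.
Proof.
rewrite trmul.
transitivity (\sum_a \sum_b \sum_i \sum_j mu i j a * (mu i j b)^* * E b a).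
  apply: eq_bigr => a _; apply: eq_bigr => b _.
  rewrite summxE mulr_suml; apply: eq_bigr => i _.
  rewrite mxE mulr_suml; apply: eq_bigr => j _.
  by rewrite /adjmx !mxE.
under eq_bigr => a _ do (rewrite exchange_big; under eq_bigr => i _ do rewrite exchange_big).
rewrite exchange_big; under eq_bigr => i _ do rewrite exchange_big.
apply: eq_bigr => i _; apply: eq_bigr => j _.
rewrite exchange_big; apply: eq_bigr => b _.
rewrite mulr_sumr; apply: eq_bigr => a _.
by ring.
Qed.

Lemma T2 (E : 'M[C]_n) :
  \tr ((\sum_i adjmx (Lmx mu i) *m Lmx mu i) *m E) =
  \sum_i \sum_j \sum_k (mu i j k)^* * \sum_b E b j * mu i b k.
Proof.
rewrite trmul.
transitivity (\sum_a \sum_b \sum_i \sum_j (mu i a j)^* * mu i b j * E b a).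
  apply: eq_bigr => a _; apply: eq_bigr => b _.
  rewrite summxE mulr_suml; apply: eq_bigr => i _.
  rewrite mxE mulr_suml; apply: eq_bigr => j _.
  by rewrite /adjmx !mxE.
under eq_bigr => a _ do rewrite exchange_big.
rewrite exchange_big; apply: eq_bigr => i _.
apply: eq_bigr => a _. rewrite exchange_big; apply: eq_bigr => j _.
rewrite mulr_sumr; apply: eq_bigr => b _.
by ring.
Qed.

Lemma T3 (E : 'M[C]_n) :
  \tr ((\sum_i adjmx (Rmx mu i) *m Rmx mu i) *m E) =
  \sum_i \sum_j \sum_k (mu i j k)^* * \sum_a E a i * mu a j k.
Proof.
rewrite trmul.
transitivity (\sum_a \sum_b \sum_i \sum_j (mu a i j)^* * mu b i j * E b a).
  apply: eq_bigr => a _; apply: eq_bigr => b _.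
  rewrite summxE mulr_suml; apply: eq_bigr => i _.
  rewrite mxE mulr_suml; apply: eq_bigr => j _.
  by rewrite /adjmx !mxE.
under eq_bigr => a _ do (rewrite exchange_big; under eq_bigr => i _ do rewrite exchange_big).
apply: eq_bigr => a _; apply: eq_bigr => i _; apply: eq_bigr => j _.
rewrite mulr_sumr; apply: eq_bigr => b _.
by ring.
Qed.
Lemma sum_delta (F : 'I_n -> C) j : \sum_i (i == j)%:R * F i = F j.
Proof.
rewrite (bigD1 j) //= eqxx mul1r big1 ?addr0 // => i /negbTE ->; by rewrite mul0r.
Qed.

Lemma sum_deltar (F : 'I_n -> C) j : \sum_i F i * (i == j)%:R = F j.
Proof. under eq_bigr => i _ do rewrite mulrC. exact: sum_delta. Qed.

Lemma der_coord (D : 'M[C]_n) : is_der mu D -> forall i j k,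
  \sum_l D k l * mu i j l = \sum_a D a i * mu a j k + \sum_b D b j * mu i b k.
Proof.
move=> HD i j k.
have Ea : forall x : 'cV[C]_n, forall k, mu_app mu x (delta_mx j 0) k 0 = \sum_a x a 0 * mu a j k.
  move=> x k'; rewrite /mu_app mxE; apply: eq_bigr => a _.
  under eq_bigr => b _ do rewrite mxE eqxx andbT -mulrA mulrCA.
  by rewrite sum_delta.
have Eb : forall y : 'cV[C]_n, forall k, mu_app mu (delta_mx i 0) y k 0 = \sum_b y b 0 * mu i b k.
  move=> y k'; rewrite /mu_app mxE.
  under eq_bigr => a _ do (under eq_bigr => b _ do rewrite mxE eqxx andbT -mulrA; rewrite -mulr_sumr).
  by rewrite sum_delta.
have := congr1 (fun M : 'cV[C]_n => M k 0) (HD (delta_mx i 0) (delta_mx j 0)).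
rewrite mxE [in X in _ = X]mxE Ea Eb.
under eq_bigr => l _ do (rewrite Ea; under eq_bigr => a _ do rewrite mxE eqxx andbT; rewrite sum_delta).
move=> ->; congr (_ + _); apply: eq_bigr => a _; congr (_ * _);
  by rewrite mxE; under eq_bigr => l _ do rewrite mxE eqxx andbT; rewrite sum_deltar.
Qed.
Definition S1 (E : 'M[C]_n) := \sum_i \sum_j \sum_k (mu i j k)^* * \sum_l E k l * mu i j l.
Definition S2 (E : 'M[C]_n) := \sum_i \sum_j \sum_k (mu i j k)^* * \sum_b E b j * mu i b k.
Definition S3 (E : 'M[C]_n) := \sum_i \sum_j \sum_k (mu i j k)^* * \sum_a E a i * mu a j k.

Lemma trM (E : 'M[C]_n) : \tr (Mmu mu *m E) = 2 * (S1 E - S2 E - S3 E).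
Proof.
rewrite /Mmu !mulmxBl !raddfB /= -!scalemxAl !linearZ /= T1 T2 T3 /S1 /S2 /S3.
rewrite -/(S1 E) -/(S2 E) -/(S3 E). rewrite /GRing.scale /=. ring.
Qed.

Lemma trMD (D : 'M[C]_n) : is_der mu D -> \tr (Mmu mu *m D) = 0.
Proof.
move=> HD; rewrite trM.
have -> : S1 D = S3 D + S2 D.
  rewrite /S1 /S2 /S3 -big_split; apply: eq_bigr => i _.
  rewrite -big_split; apply: eq_bigr => j _.
  rewrite -big_split; apply: eq_bigr => k _.
  by rewrite der_coord // mulrDr.
ring.
Qed.

Lemma trM1 : \tr (Mmu mu) = - 2 * normsq mu.
Proof.
rewrite -[Mmu mu]mulmx1 trM.
have E1 : S1 1%:M = normsq mu.
  rewrite /S1 /normsq; apply: eq_bigr => i _; apply: eq_bigr => j _; apply: eq_bigr => k _.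
  under eq_bigr => l _ do rewrite mxE eq_sym.
  by rewrite sum_delta normCK mulrC.
have E2 : S2 1%:M = normsq mu.
  rewrite /S2 /normsq; apply: eq_bigr => i _; apply: eq_bigr => j _; apply: eq_bigr => k _.
  under eq_bigr => l _ do rewrite mxE.
  by rewrite sum_delta normCK mulrC.
have E3 : S3 1%:M = normsq mu.
  rewrite /S3 /normsq; apply: eq_bigr => i _; apply: eq_bigr => j _; apply: eq_bigr => k _.
  under eq_bigr => l _ do rewrite mxE.
  by rewrite sum_delta normCK mulrC.
rewrite E1 E2 E3; ring.
Qed.

Definition herm (A : 'M[C]_n) := forall a b, A b a = (A a b)^*.

Lemma trsq (A : 'M[C]_n) : herm A -> \tr (A *m A) = \sum_a \sum_b `|A a b| ^+ 2.
Proof.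
move=> HA; rewrite trmul; apply: eq_bigr => a _; apply: eq_bigr => b _.
by rewrite (HA a b) normCK.
Qed.

Lemma sum_gt0 (G : 'I_n -> C) a : (forall i, 0 <= G i) -> 0 < G a -> 0 < \sum_i G i.
Proof.
move=> H0 Ha; rewrite (bigD1 a) //=; apply: (lt_le_trans Ha).
by rewrite lerDl sumr_ge0.
Qed.

Lemma sum2_gt0 (F : 'I_n -> 'I_n -> C) : (forall a b, 0 <= F a b) ->
  (exists a b, 0 < F a b) -> 0 < \sum_a \sum_b F a b.
Proof.
move=> H0 [a [b Hab]].
apply: (@sum_gt0 _ a) => [i|]; first by apply: sumr_ge0.
exact: (@sum_gt0 _ b).
Qed.

Lemma trsq_gt0 (A : 'M[C]_n) : herm A -> A != 0 -> 0 < \tr (A *m A).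
Proof.
move=> HA Hnz; rewrite trsq //; apply: sum2_gt0 => [a b|]; first exact: exprn_ge0.
have : [exists a, [exists b, A a b != 0]].
  move: Hnz; apply: contraR; rewrite negb_exists => /forallP H.
  apply/eqP/matrixP => a b; rewrite mxE; apply/eqP.
  by have := H a; rewrite negb_exists => /forallP /(_ b); rewrite negbK.
case/existsP => a /existsP [b Hab].
by exists a, b; rewrite exprn_gt0 // normr_gt0.
Qed.

Lemma herm1 (A : 'M[C]_n) : herm (A *m adjmx A).
Proof.
move=> a b; rewrite !mxE rmorph_sum; apply: eq_bigr => j _.
by rewrite /adjmx !mxE rmorphM /= conjCK mulrC.
Qed.

Lemma herm2 (A : 'M[C]_n) : herm (adjmx A *m A).
Proof.
move=> a b; rewrite !mxE rmorph_sum; apply: eq_bigr => j _.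
by rewrite /adjmx !mxE rmorphM /= conjCK mulrC.
Qed.

Lemma herm_M : herm (Mmu mu).
Proof.
move=> a b; rewrite /Mmu !mxE !summxE !rmorphB !rmorphM /= !rmorph_sum /= conjC_nat.
congr (_ * _ - _ * _ - _ * _); apply: eq_bigr => i _; by rewrite (herm1, herm2).
Qed.

Lemma herm_sub (A : 'M[C]_n) (c : R) : herm A -> herm (A - (c%:C)%C%:M).
Proof.
move=> HA a b; rewrite !mxE rmorphB /= (HA a b) rmorphMn /= eq_sym; congr (_ - _ *+ _).
symmetry; exact: conjc_real.
Qed.

End S.

Theorem lemma3p6 (R : realType) (n : nat) (mu : bilin R n)
    (c : R) (D : 'M[complex R]_n) :
  (exists i j k, mu i j k != 0) ->
  is_der mu D ->
  Mmu mu = (real_complex R c)%:M + D ->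
  (real_complex R c = \tr (Mmu mu *m Mmu mu) / \tr (Mmu mu)
   /\ real_complex R c = - (1 / 2) * (\tr (Mmu mu *m Mmu mu) / normsq mu)
   /\ c < 0)
  /\ (\tr D != 0 ->
      real_complex R c = - (\tr (D *m D) / \tr D) /\ 0 < \tr D).
Proof.
move=> [i [j [k Hne]]] HD HM.
set c' := real_complex R c in HM *.
have N0 : 0 < normsq mu.
  rewrite /normsq; apply: (@sum_gt0 _ _ _ i) => [a|].
    by apply: sumr_ge0 => b _; apply: sumr_ge0 => l _; apply: exprn_ge0.
  apply: sum2_gt0 => [a b|]; first exact: exprn_ge0.
  by exists j, k; rewrite exprn_gt0 // normr_gt0.
have tM := @trM1 R n mu.
have tMD := @trMD R n mu D HD.
have hM := @herm_M R n mu.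
have T0 : \tr (Mmu mu) != 0 by rewrite tM mulf_neq0 ?oppr_eq0 ?pnatr_eq0 // lt0r_neq0.
have Mnz : Mmu mu != 0 by apply: contraNneq T0 => ->; rewrite raddf0.
have MM0 : 0 < \tr (Mmu mu *m Mmu mu) by apply: trsq_gt0.
have tMM : \tr (Mmu mu *m Mmu mu) = c' * \tr (Mmu mu).
  rewrite {2}HM mulmxDr raddfD /= mul_mx_scalar linearZ /= tMD addr0.
  by rewrite /GRing.scale.
have DE : D = Mmu mu - c'%:M by rewrite HM [c'%:M + D]addrC addrK.
have hD : herm R n D by rewrite DE; apply: herm_sub.
have tMD' : \tr (Mmu mu *m D) = c' * \tr D + \tr (D *m D).
  rewrite {1}HM mulmxDl raddfD /= mul_scalar_mx linearZ /=.
  by rewrite /GRing.scale.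
have c'lt0 : c' < 0.
  have -> : c' = - (1 / 2) * (\tr (Mmu mu *m Mmu mu) / normsq mu).
    rewrite tMM tM; field; rewrite lt0r_neq0 //.
  by rewrite mulNr oppr_lt0 mulr_gt0 ?divr_gt0 // ltr01.
split; first split.
- by rewrite tMM mulfK.
- split; last by rewrite -(ltcR c 0).
  rewrite tMM tM; field; rewrite lt0r_neq0 //.
move=> tD0.
have Dnz : D != 0 by apply: contraNneq tD0 => ->; rewrite raddf0.
have DD0 : 0 < \tr (D *m D) by apply: trsq_gt0.
have eq1 : c' * \tr D + \tr (D *m D) = 0 by rewrite -tMD'.
split.
- apply: (mulIf tD0); rewrite mulNr divfK //; apply/eqP; rewrite -addr_eq0 addrC; apply/eqP.
  by rewrite addrC.
- have -> : \tr D = \tr (D *m D) / (- c').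
    apply: (mulIf (x := - c')); first by rewrite oppr_eq0 ltr0_neq0.
    rewrite divfK ?oppr_eq0 ?ltr0_neq0 // mulrN; apply/eqP; rewrite eq_sym -addr_eq0 mulrC.
    by rewrite addrC; apply/eqP.
  by rewrite divr_gt0 // oppr_gt0.
Qed.
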